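(* Let $G\subseteq \mathrm{GL}(N)$ be a quadratic matrix Lie group with reductive Lie algebra $\mathfrak{g}$, and $B:\mathfrak{g}\to\mathfrak{g}$ smooth. Consider the canonical Hamiltonian system on $T^*G$ (points written as pairs of $N\times N$ matrices $(g,p)$) $$\dot g=g\,B(g^\dagger p)^\dagger,\qquad \dot p=-p\,B(g^\dagger p),$$ and apply an $s$-stage SDIRK method with weights $b_i$, step $h$, $h_i=hb_i$, written as follows: with $g_{n,r_0}=g_n$, $p_{n,r_0}=p_n$, for $i=1,\dots,s$ the stage slopes $k^g_{n,i},k^p_{n,i}$ satisfy $$k^g_{n,i}=\Big(g_{n,r_{i-1}}+\tfrac{h_i}{2}k^g_{n,i}\Big)B(\mu_{n,c_i})^\dagger,\qquad k^p_{n,i}=-\Big(p_{n,r_{i-1}}+\tfrac{h_i}{2}k^p_{n,i}\Big)B(\mu_{n,c_i}),$$ $$\mu_{n,c_i}=\Big(g_{n,r_{i-1}}+\tfrac{h_i}{2}k^g_{n,i}\Big)^{\dagger}\Big(p_{n,r_{i-1}}+\tfrac{h_i}{2}k^p_{n,i}\Big),$$ and $g_{n,r_i}=g_{n,r_{i-1}}+h_ik^g_{n,i}$, $p_{n,r_i}=p_{n,r_{i-1}}+h_ik^p_{n,i}$, $g_{n+1}=g_{n,r_s}$, $p_{n+1}=p_{n,r_s}$. Write $B_i=B(\mu_{n,c_i})$ and assume $\mathrm{Id}\pm\tfrac{h_i}{2}B_i$ are invertible. Then $$g_{n,r_i}=g_{n,r_{i-1}}\,\mathrm{cay}(h_iB_i^\dagger),\qquad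 p_{n,r_i}=p_{n,r_{i-1}}\,\mathrm{cay}(h_iB_i)^{-1},$$ hence $g_{n+1}=g_n\prod_{i=1}^s\mathrm{cay}(h_iB_i^\dagger)$ and $p_{n+1}=p_n\prod_{i=1}^s\mathrm{cay}(h_iB_i)^{-1}$. Moreover, with $\mu_{n,r_i}:=g_{n,r_i}^\dagger p_{n,r_i}$, $$\mu_{n,r_i}=\mathrm{cay}(h_iB_i)\,\mu_{n,r_{i-1}}\,\mathrm{cay}(h_iB_i)^{-1},\qquad \mu_{n,c_i}=\Big(\mathrm{Id}-\tfrac{h_i}{2}B_i\Big)^{-1}\mu_{n,r_{i-1}}\Big(\mathrm{Id}+\tfrac{h_i}{2}B_i\Big)^{-1},$$ so that $\mu_{n,r_{i-1}}=(\mathrm{Id}-\tfrac{h_i}{2}B_i)\mu_{n,c_i}(\mathrm{Id}+\tfrac{h_i}{2}B_i)$ and $\mu_{n,r_i}=(\mathrm{Id}+\tfrac{h_i}{2}B_i)\mu_{n,c_i}(\mathrm{Id}-\tfrac{h_i}{2}B_i)$. Also $\mu_{n,c_i}=g_{n,c_i}^\dagger p_{n,c_i}$ with $g_{n,c_i}=\tfrac12(g_{n,r_{i-1}}+g_{n,r_i})$ and $p_{n,c_i}=\tfrac12(p_{n,r_{i-1}}+p_{n,r_i})$.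
   Context: $\dagger$ denotes conjugate transpose; $\mathrm{cay}(\xi)=(\mathrm{Id}-\xi/2)^{-1}(\mathrm{Id}+\xi/2)$. A quadratic matrix Lie group is $G\subseteq\mathrm{GL}(N)$ defined by a quadratic relation with a fixed matrix $J$ (e.g. $\mathrm{O}(n)$, $\mathrm{SO}(n)$, $\mathrm{Sp}(2N)$); its Lie algebra elements satisfy $J\xi+\xi^\dagger J=0$. Reductive means $[\mathfrak{g}^\dagger,\mathfrak{g}]\subset\mathfrak{g}$. The Hamiltonian system above is the reconstruction of the Lie–Poisson system $\dot\mu=[B(\mu),\mu]$, $B=\nabla H^\dagger$, via the momentum map $\mu=g^\dagger p$. An $s$-stage SDIRK has $a_{ij}=b_j$ ($j<i$), $a_{ii}=b_i/2$, $a_{ij}=0$ ($j>i$), weights $b_i$ with $\sum b_i=1$. *)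

(* Defs.v *)
(* Matrices over a numeric algebraically closed field C
   (e.g. algC), with Num.conj as complex conjugation. Size N = n.+1. *)
From mathcomp Require Import all_boot all_order all_algebra.
Set Implicit Arguments. Unset Strict Implicit. Unset Printing Implicit Defensive.
Import GRing.Theory Num.Theory.
Local Open Scope ring_scope.

Section Defs.
Variables (C : numClosedFieldType) (n : nat).
Local Notation M := 'M[C]_n.+1.

Definition dag (A : M) : M := (map_mx Num.conj A)^T.

Definition cay (xi : M) : M := invmx (1%:M - 2^-1 *: xi) *m (1%:M + 2^-1 *: xi).

Definition quad_group (J g : M) : Prop := dag g *m J *m g = J /\ g \in unitmx.
Definition lie_alg (J xi : M) : Prop := J *m xi + dag xi *m J = 0.
Definition reductive (J : M) : Prop :=
  forall x y, lie_alg J x -> lie_alg J y -> lie_alg J (dag x *m y - y *m dag x).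

(* SDIRK stage data: stage index i in 1..s; gr, pr : stage values g_{n,r_i},
   p_{n,r_i} (index 0 = g_n, p_n); kg, kp : stage slopes. *)
Definition hstage (h : C) (b : nat -> C) (i : nat) : C := h * b i.
Definition gstar h b (gr kg : nat -> M) i : M := gr i.-1 + (hstage h b i / 2) *: kg i.
Definition pstar h b (pr kp : nat -> M) i : M := pr i.-1 + (hstage h b i / 2) *: kp i.
Definition muc h b (gr kg pr kp : nat -> M) i : M :=
  dag (gstar h b gr kg i) *m pstar h b pr kp i.
Definition mur (gr pr : nat -> M) i : M := dag (gr i) *m pr i.
End Defs.

(* Main.v *)
Require Import Defs.
From mathcomp Require Import all_boot all_order all_algebra.
Import GRing.Theory Num.Theory.
Local Open Scope ring_scope.
Section Dag.
Variables (C : numClosedFieldType) (n : nat).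
Local Notation M := 'M[C]_n.+1.
Implicit Types A B : M.

Lemma dagM A B : dag (A *m B) = dag B *m dag A.
Proof. by rewrite /dag map_mxM trmx_mul. Qed.
Lemma dagD A B : dag (A + B) = dag A + dag B.
Proof. by rewrite /dag map_mxD linearD. Qed.
Lemma dagN A : dag (- A) = - dag A.
Proof. by rewrite /dag map_mxN linearN. Qed.
Lemma dagB A B : dag (A - B) = dag A - dag B.
Proof. by rewrite dagD dagN. Qed.
Lemma dagZ (c : C) A : dag (c *: A) = Num.conj c *: dag A.
Proof. by rewrite /dag map_mxZ linearZ. Qed.
Lemma dag1 : dag (1%:M : M) = 1%:M.
Proof. by rewrite /dag map_mx1 trmx1. Qed.
Lemma dagK A : dag (dag A) = A.
Proof. by rewrite /dag map_trmx trmxK; apply/matrixP=> i j; rewrite !mxE conjCK. Qed.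
Lemma dag_unit A : (dag A \in unitmx) = (A \in unitmx).
Proof. by rewrite /dag unitmx_tr map_unitmx. Qed.
Lemma dag_inv A : dag (invmx A) = invmx (dag A).
Proof. by rewrite /dag map_invmx trmx_inv. Qed.
Lemma commPM (X : M) : (1%:M + X) *m (1%:M - X) = (1%:M - X) *m (1%:M + X).
Proof.
rewrite mulmxE.
have -> : (1%:M + X) * (1%:M - X) = 1 - X * X.
  by rewrite mulrDl mulrBr mulrBr !mul1r mulr1 addrA subrK.
by rewrite mulrBl mulrDr mulrDr !mul1r mulr1 opprD addrA addrK.
Qed.
Lemma half2 (X : M) : 2^-1 *: (X + X) = X.
Proof.
by rewrite -{1 2}[X]scale1r -scalerDl scalerA mulVf ?scale1r // pnatr_eq0.
Qed.
End Dag.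
Section Stage.
Variables (C : numClosedFieldType) (n : nat).
Local Notation M := 'M[C]_n.+1.

Lemma stage (g' p' g p G P kg kp Bm : M) (hi : C) :
  hi \is Num.real ->
  G = g' + (hi / 2) *: kg -> kg = G *m dag Bm -> g = g' + hi *: kg ->
  P = p' + (hi / 2) *: kp -> kp = - (P *m Bm) -> p = p' + hi *: kp ->
  1%:M - (hi / 2) *: Bm \in unitmx -> 1%:M + (hi / 2) *: Bm \in unitmx ->
  [/\ g = g' *m cay (hi *: dag Bm),
      p = p' *m invmx (cay (hi *: Bm)) &
      dag g *m p = cay (hi *: Bm) *m (dag g' *m p') *m invmx (cay (hi *: Bm))] /\
  [/\ dag G *m P = invmx (1%:M - (hi / 2) *: Bm) *m (dag g' *m p')
                *m invmx (1%:M + (hi / 2) *: Bm),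
      dag g' *m p' = (1%:M - (hi / 2) *: Bm) *m (dag G *m P) *m (1%:M + (hi / 2) *: Bm),
      dag g *m p = (1%:M + (hi / 2) *: Bm) *m (dag G *m P) *m (1%:M - (hi / 2) *: Bm) &
      dag G *m P = dag (2^-1 *: (g' + g)) *m (2^-1 *: (p' + p))].
Proof.
move=> hr hG hk hg hP hkp hp hW hV.
set a := hi / 2 in hG hP hW hV *.
set D := dag Bm.
have ar : Num.conj a = a.
  by apply: conj_Creal; rewrite /a realM ?realV ?hr // realn.
have hia : hi = a + a by rewrite /a -splitr.
have e1 : g' = G *m (1%:M - a *: D).
  by rewrite mulmxBr mulmx1 -scalemxAr -hk hG addrK.
have e2 : g = G *m (1%:M + a *: D).
  by rewrite mulmxDr mulmx1 -scalemxAr -hk hg hG hia scalerDl addrA.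
have e3 : p' = P *m (1%:M + a *: Bm).
  by rewrite mulmxDr mulmx1 -scalemxAr -[P *m Bm]opprK -hkp scalerN hP addrK.
have e4 : p = P *m (1%:M - a *: Bm).
  by rewrite mulmxBr mulmx1 -scalemxAr -[P *m Bm]opprK -hkp scalerN opprK hp hP hia scalerDl addrA.
have dW : dag (1%:M - a *: D) = 1%:M - a *: Bm.
  by rewrite dagB dag1 dagZ ar dagK.
have dV : dag (1%:M + a *: D) = 1%:M + a *: Bm.
  by rewrite dagD dag1 dagZ ar dagK.
have hW' : 1%:M - a *: D \in unitmx by rewrite -dag_unit dW.
have ecay : forall X : M, cay (hi *: X) = invmx (1%:M - a *: X) *m (1%:M + a *: X).
  by move=> X; rewrite /cay !scalerA mulrC.
have comm : (1%:M + a *: Bm) *m (1%:M - a *: Bm) = (1%:M - a *: Bm) *m (1%:M + a *: Bm).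
  exact: commPM.

have eG : G = g' *m invmx (1%:M - a *: D) by rewrite e1 mulmxK.
have eP : P = p' *m invmx (1%:M + a *: Bm) by rewrite e3 mulmxK.
have mur0 : dag g' *m p' = (1%:M - a *: Bm) *m (dag G *m P) *m (1%:M + a *: Bm).
  by rewrite e1 e3 dagM dW !mulmxA.
have mur1 : dag g *m p = (1%:M + a *: Bm) *m (dag G *m P) *m (1%:M - a *: Bm).
  by rewrite e2 e4 dagM dV !mulmxA.
have icay : invmx (cay (hi *: Bm)) = invmx (1%:M + a *: Bm) *m (1%:M - a *: Bm).
  have hc : cay (hi *: Bm) *m (invmx (1%:M + a *: Bm) *m (1%:M - a *: Bm)) = 1%:M.
    by rewrite ecay !mulmxA mulmxK // mulVmx.
  have [cu _] := mulmx1_unit hc.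
  by have := congr1 (mulmx (invmx (cay (hi *: Bm)))) hc; rewrite mulKmx // mulmx1 => ->.
split; split.
- by rewrite ecay mulmxA -eG e2.
- by rewrite icay mulmxA -eP e4.
- rewrite icay ecay mur0 !mulmxA (mulmxK hV) -(mulmxA (invmx _)) comm mulKmx // mur1 !mulmxA.
  done.
- by rewrite mur0 !mulmxA mulVmx // mul1mx mulmxK.
- exact: mur0.
- exact: mur1.
- have -> : 2^-1 *: (g' + g) = G.
    by rewrite e1 e2 -mulmxDr addrACA addNr addr0 mulmxDr mulmx1 half2.
  have -> : 2^-1 *: (p' + p) = P.
    by rewrite e3 e4 -mulmxDr addrACA subrr addr0 mulmxDr mulmx1 half2.
  done.
Qed.
End Stage
.

Theorem mainTheorem2 (C : numClosedFieldType) (n : nat)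
  (J : 'M[C]_n.+1) (B : 'M[C]_n.+1 -> 'M[C]_n.+1)
  (s : nat) (b : nat -> C) (h : C)
  (gr pr kg kp : nat -> 'M[C]_n.+1) :
  (* quadratic matrix Lie group with reductive Lie algebra, B : g -> g *)
  J \in unitmx -> reductive J ->
  (forall xi, lie_alg J xi -> lie_alg J (B xi)) ->
  (* SDIRK weights and real step *)
  (forall i, (1 <= i <= s)%N -> b i \is Num.real) ->
  \sum_(1 <= i < s.+1) b i = 1 ->
  h \is Num.real ->
  (* initial point on T^*G *)
  quad_group J (gr 0%N) ->
  (* the SDIRK stage equations, with B_i = B(mu_{n,c_i}) *)
  (forall i, (1 <= i <= s)%N ->
     let Bi := B (muc h b gr kg pr kp i) in
     [/\ kg i = gstar h b gr kg i *m dag Bi,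
         kp i = - (pstar h b pr kp i *m Bi),
         gr i = gr i.-1 + hstage h b i *: kg i &
         pr i = pr i.-1 + hstage h b i *: kp i]) ->
  (* invertibility of Id +- (h_i/2) B_i *)
  (forall i, (1 <= i <= s)%N ->
     let Bi := B (muc h b gr kg pr kp i) in
     (1%:M - (hstage h b i / 2) *: Bi \in unitmx) /\
     (1%:M + (hstage h b i / 2) *: Bi \in unitmx)) ->
  (forall i, (1 <= i <= s)%N ->
     let hi := hstage h b i in
     let Bi := B (muc h b gr kg pr kp i) in
     let mc := muc h b gr kg pr kp i in
     [/\ gr i = gr i.-1 *m cay (hi *: dag Bi),
         pr i = pr i.-1 *m invmx (cay (hi *: Bi)) &
         mur gr pr i = cay (hi *: Bi) *m mur gr pr i.-1 *m invmx (cay (hi *: Bi))] /\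
     [/\ mc = invmx (1%:M - (hi / 2) *: Bi) *m mur gr pr i.-1
                *m invmx (1%:M + (hi / 2) *: Bi),
         mur gr pr i.-1 = (1%:M - (hi / 2) *: Bi) *m mc *m (1%:M + (hi / 2) *: Bi),
         mur gr pr i = (1%:M + (hi / 2) *: Bi) *m mc *m (1%:M - (hi / 2) *: Bi) &
         mc = dag (2^-1 *: (gr i.-1 + gr i)) *m (2^-1 *: (pr i.-1 + pr i))])
  /\
  gr s = gr 0%N *m \prod_(1 <= i < s.+1) cay (hstage h b i *: dag (B (muc h b gr kg pr kp i)))
  /\
  pr s = pr 0%N *m \prod_(1 <= i < s.+1) invmx (cay (hstage h b i *: B (muc h b gr kg pr kp i))).
Proof.
move=> _ _ _ breal _ hreal _ heq hinv.
have st : forall i, (1 <= i <= s)%N ->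
     let hi := hstage h b i in
     let Bi := B (muc h b gr kg pr kp i) in
     let mc := muc h b gr kg pr kp i in
     ([/\ gr i = gr i.-1 *m cay (hi *: dag Bi),
         pr i = pr i.-1 *m invmx (cay (hi *: Bi)) &
         mur gr pr i = cay (hi *: Bi) *m mur gr pr i.-1 *m invmx (cay (hi *: Bi))] /\
     [/\ mc = invmx (1%:M - (hi / 2) *: Bi) *m mur gr pr i.-1
                *m invmx (1%:M + (hi / 2) *: Bi),
         mur gr pr i.-1 = (1%:M - (hi / 2) *: Bi) *m mc *m (1%:M + (hi / 2) *: Bi),
         mur gr pr i = (1%:M + (hi / 2) *: Bi) *m mc *m (1%:M - (hi / 2) *: Bi) &
         mc = dag (2^-1 *: (gr i.-1 + gr i)) *m (2^-1 *: (pr i.-1 + pr i))])%type.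
  move=> i hi /=.
  have [hk hkp hg hp] := heq i hi.
  have [hW hV] := hinv i hi.
  rewrite /mur.
  apply: (@stage C n (gr i.-1) (pr i.-1) (gr i) (pr i) (gstar h b gr kg i) (pstar h b pr kp i) (kg i) (kp i)) => //.
  by rewrite /hstage realM // breal.
split; first exact: st.
have key : forall k, (k <= s)%N ->
  gr k = gr 0%N *m \prod_(1 <= i < k.+1) cay (hstage h b i *: dag (B (muc h b gr kg pr kp i)))
  /\ pr k = pr 0%N *m \prod_(1 <= i < k.+1) invmx (cay (hstage h b i *: B (muc h b gr kg pr kp i))).
  elim=> [|k IH] hk.
    by rewrite !big_geq // !mulmx1.
  have [IH1 IH2] := IH (ltnW hk).
  have hk' : (1 <= k.+1 <= s)%N by rewrite hk.
  have [[e1 e2 _] _] := st _ hk'.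
  rewrite (big_nat_recr k.+1) //= (big_nat_recr k.+1) //=.
  by rewrite e1 e2 /= IH1 IH2 !mulmxE !mulrA.
exact: key.
Qed.
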